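(* Let $\mathbb{V}$ be a finitary variety of algebras which has 2-fold subobject decompositions over the countably infinite set $\mathbb{N}$. Then $\mathbb{V}$ is trivial, i.e. every algebra in $\mathbb{V}$ has at most one element.
   Context: A variety of algebras (as a category, it is regular) has 2-fold subobject decompositions over $\mathbb{N}$ if for every family $(A_n)_{n\in\mathbb{N}}$ of algebras in $\mathbb{V}$ and any two subalgebras $S,T$ of $\prod_{n\in\mathbb{N}}A_n$: if for all $i\neq j$ in $\mathbb{N}$ the images of $S$ and $T$ under the projection $\prod_n A_n\to A_i\times A_j$ coincide, then $S=T$. Finitary means all basic operations have finite arity. *)

(* Defs.v *)
From mathcomp Require Import all_boot.
Set Implicit Arguments. Unset Strict Implicit. Unset Printing Implicit Defensive.

Record signature := Signature {
  op_sym : Type;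
  arity : op_sym -> nat }.

Record algebra (sigma : signature) := Algebra {
  carrier :> Type;
  interp : forall o : op_sym sigma, ('I_(arity o) -> carrier) -> carrier }.

Inductive term (sigma : signature) : Type :=
  | Var : nat -> term sigma
  | App : forall o : op_sym sigma, ('I_(arity o) -> term sigma) -> term sigma.

Fixpoint eval (sigma : signature) (A : algebra sigma) (v : nat -> A)
  (t : term sigma) : A :=
  match t with
  | Var n => v n
  | App o args => @interp sigma A o (fun i => eval v (args i))
  end.

Definition identities (sigma : signature) := term sigma -> term sigma -> Prop.

Definition in_variety (sigma : signature) (E : identities sigma)
  (A : algebra sigma) : Prop :=
  forall s t, E s t -> forall v : nat -> A, eval v s = eval v t.

Definition is_subalgebra (sigma : signature) (A : algebra sigma)
  (S : A -> Prop) : Prop :=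
  forall (o : op_sym sigma) (args : 'I_(arity o) -> A),
    (forall i, S (args i)) -> S (@interp sigma A o args).

Definition prod_alg (sigma : signature) (A : nat -> algebra sigma)
  : algebra sigma :=
  @Algebra sigma (forall n, A n)
    (fun o args => fun n => @interp sigma (A n) o (fun i => args i n)).

Definition proj2_image (sigma : signature) (A : nat -> algebra sigma)
  (S : prod_alg A -> Prop) (i j : nat) : A i * A j -> Prop :=
  fun p => exists x : prod_alg A, S x /\ (x i, x j) = p.

Definition has_2fold_decomp (sigma : signature) (E : identities sigma) : Prop :=
  forall (A : nat -> algebra sigma), (forall n, in_variety E (A n)) ->
  forall S T : prod_alg A -> Prop,
    is_subalgebra S -> is_subalgebra T ->
    (forall i j : nat, i <> j ->
       forall p, @proj2_image sigma A S i j p <-> @proj2_image sigma A T i j p) ->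
    forall x, S x <-> T x.

(* Main.v *)
Require Import Defs.
From Stdlib Require Import FunctionalExtensionality.
From mathcomp Require Import all_boot.

Lemma fin_bound (k : nat) (P : 'I_k -> nat -> Prop) :
  (forall i, exists N, forall n, N <= n -> P i n) ->
  exists N, forall i n, N <= n -> P i n.
Proof.
elim: k P => [|k IH] P H.
  by exists 0 => -[].
have [N1 H1] := IH (fun i => P (lift ord0 i)) (fun i => H _).
have [N0 H0] := H ord0.
exists (maxn N0 N1) => i n le.
case: (unliftP ord0 i) => [j ->|->].
  by apply: H1; apply: leq_trans le; apply: leq_maxr.
by apply: H0; apply: leq_trans le; apply: leq_maxl.
Qed.

Theorem proposition4p9 (sigma : signature) (E : identities sigma) :
  has_2fold_decomp E ->
  forall A : algebra sigma, in_variety E A -> forall x y : A, x = y.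
Proof.
move=> HD A HA x y.
pose AA := fun _ : nat => A.
pose S := fun f : prod_alg AA => exists N, forall n, N <= n -> f n = f N.
pose T := fun f : prod_alg AA => True.
have key : forall f, S f <-> T f.
  apply: (HD AA (fun _ => HA) S T).
  - move=> o args Hargs.
    have [N HN] := @fin_bound _ (fun i n => args i n.+1 = args i n)
      (fun i => let: ex_intro N HN := Hargs i in
         ex_intro _ N (fun n le => etrans (HN n.+1 (leq_trans le (leqnSn n))) (esym (HN n le)))).
    exists N => n le /=.
    have Eq : (fun i => args i n) = (fun i => args i N).
      apply: functional_extensionality => i.
      rewrite -(subnKC le); elim: (n - N) => [|d IHd]; first by rewrite addn0.
      by rewrite addnS HN ?leq_addr.
    by rewrite Eq.
  - by [].
  - move=> i j ij [a b]; split.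
      by move=> [f [_ e]]; exists f.
    move=> _.
    pose f := (fun n => if n == i then a else if n == j then b else a) : prod_alg AA.
    exists f; split.
      exists (maxn i j).+1 => n le.
      rewrite /f.
      have ni : (n == i) = false.
        by apply/negbTE; rewrite neq_ltn; apply/orP; right; apply: leq_trans le; rewrite ltnS leq_maxl.
      have nj : (n == j) = false.
        by apply/negbTE; rewrite neq_ltn; apply/orP; right; apply: leq_trans le; rewrite ltnS leq_maxr.
      have Ni : ((maxn i j).+1 == i) = false.
        by apply/negbTE; rewrite neq_ltn; apply/orP; right; rewrite ltnS leq_maxl.
      have Nj : ((maxn i j).+1 == j) = false.
        by apply/negbTE; rewrite neq_ltn; apply/orP; right; rewrite ltnS leq_maxr.
      by rewrite ni nj Ni Nj.
    rewrite /f eqxx.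
    have -> : (j == i) = false by apply/eqP => e; apply: ij.
    by rewrite eqxx.
pose g := (fun n => if odd n then x else y) : prod_alg AA.
have [N HN] := proj2 (key g) I.
have := HN N.+1 (leqnSn N).
rewrite /g /=.
by case: (odd N) => /= ->.
Qed.
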